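(* There exist a finite atom set $\Phi$, a finite agent set $I$, a logic $\Lambda$, an $\boldsymbol{\mathcal{L}}_\Lambda$ modal space $\boldsymbol{X}$ and a clean map $\boldsymbol{f}$ on $\boldsymbol{X}$ induced by a finite, Boolean multi-pointed action model that is not static, such that $\boldsymbol{f}$ exhibits nontrivial recurrence (with respect to the Stone topology): there is $\boldsymbol{x}\in\boldsymbol{X}$ whose orbit $\mathcal{O}_{\boldsymbol{f}}(\boldsymbol{x})$ is not periodic and contains a recurrent point.
   Context: Setting: atom set $\Phi$, finite agent set $I$, modal language $\mathcal{L}$ ($\varphi::=\top\mid p\mid\neg\varphi\mid\varphi\wedge\varphi\mid\square_i\varphi$), logic $\Lambda$ a normal modal logic extending $K$, $\boldsymbol{\mathcal{L}}_\Lambda$ the set of $\Lambda$-equivalence classes of formulas. For a set $X$ of pointed Kripke models (countable nonempty state sets, standard semantics), the modal space is $\boldsymbol{X}=\{\boldsymbol{x}:x\in X\}$, $\boldsymbol{x}=\{y\in X:y,x\text{ satisfy the same formulas}\}$, with the Stone topology generated by the sets $\{\boldsymbol{x}:x\vDash\varphi\}$. Clean map: induced via product update $x\mapsto x\otimes\Sigma\Gamma$ by a multi-pointed action model $\Sigma\Gamma=(\llbracket\Sigma\rrbracket,\mathsf{R},pre,post,\Gamma)$ (countable action set, relations $\mathsf{R}_i$, preconditions in $\mathcal{L}$, postconditions $\top$ or conjunctions of literals over $\Phi$, designated set $\emptyset\ne\Gamma\subseteq\llbracket\Sigma\rrbracket$) that is precondition finite, exhaustive, deterministic and closing over $X$ (every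 $x\in X$ satisfies $pre(\sigma)$ for exactly one $\sigma\in\Gamma$, finitely many preconditions up to equivalence, and $x\otimes\Sigma\Gamma\in X$). Product update: states $(s,\sigma)$ with $Ms\vDash pre(\sigma)$, relations componentwise, $p$ true at $(s,\sigma)$ iff $post(\sigma)\vDash p$, or $s\in\llbracket p\rrbracket$ and $post(\sigma)\nvDash\neg p$; designated state $(s,\sigma)$ for the applicable $\sigma\in\Gamma$. $\boldsymbol{f}(\boldsymbol{x})$ is the class of $x\otimes\Sigma\Gamma$. $\Sigma\Gamma$ is finite if $\llbracket\Sigma\rrbracket$ is finite, Boolean if every precondition is a Boolean (modality-free) formula, static if every postcondition is $\top$. Orbit: $\mathcal{O}_{\boldsymbol{f}}(\boldsymbol{x})=\{\boldsymbol{f}^n(\boldsymbol{x}):n\in\mathbb{N}_0\}$; it is periodic if $\boldsymbol{f}^{n+k}(\boldsymbol{x})=\boldsymbol{f}^n(\boldsymbol{x})$ for some $n\ge0,k>0$. The limit set $\omega_{\boldsymbol{f}}(\boldsymbol{y})$ is the set of limits of convergent subsequences $\boldsymbol{f}^{n_1}(\boldsymbol{y}),\boldsymbol{f}^{n_2}(\boldsymbol{y}),\dots$ ($n_1<n_2<\cdots$); $\boldsymbol{y}$ is recurrent if $\boldsymbol{y}\in\omega_{\boldsymbol{f}}(\boldsymbol{y})$. *)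

(* Defs.v *)
From Stdlib Require Import List Arith.
Import ListNotations.
Set Implicit Arguments.

Section Modal.
Variables (A : Type) (G : Type) .

Inductive form : Type :=
| FTop : form
| FAtom : A -> form
| FNeg : form -> form
| FAnd : form -> form -> form
| FBox : G -> form -> form.

Definition FImp (p q : form) : form := FNeg (FAnd p (FNeg q)).
Definition FIff (p q : form) : form := FAnd (FImp p q) (FImp q p).

Fixpoint boolean_form (p : form) : Prop :=
  match p with
  | FTop => True
  | FAtom _ => True
  | FNeg q => boolean_form q
  | FAnd q r => boolean_form q /\ boolean_form r
  | FBox _ _ => False
  end.

Fixpoint subst (s : A -> form) (p : form) : form :=
  match p with
  | FTop => FTop
  | FAtom a => s a
  | FNeg q => FNeg (subst s q)
  | FAnd q r => FAnd (subst s q) (subst s r)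
  | FBox i q => FBox i (subst s q)
  end.

(** Propositional tautologies: atoms and boxed formulas treated as
    propositional variables. *)
Fixpoint tval (v : form -> bool) (p : form) : bool :=
  match p with
  | FTop => true
  | FAtom a => v (FAtom a)
  | FNeg q => negb (tval v q)
  | FAnd q r => andb (tval v q) (tval v r)
  | FBox i q => v (FBox i q)
  end.

Definition tautology (p : form) : Prop := forall v, tval v p = true.

Definition normal_logic (L : form -> Prop) : Prop :=
  (forall p, tautology p -> L p) /\
  (forall i p q, L (FImp (FBox i (FImp p q)) (FImp (FBox i p) (FBox i q)))) /\
  (forall p q, L p -> L (FImp p q) -> L q) /\
  (forall i p, L p -> L (FBox i p)) /\
  (forall s p, L p -> L (subst s p)).

Record kmodel : Type := KModel {
  kst : Type;
  krel : G -> kst -> kst -> Prop;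
  kval : A -> kst -> Prop }.

Record pmodel : Type := PModel {
  pm_model : kmodel;
  pm_point : kst pm_model }.

Fixpoint sat (M : kmodel) (s : kst M) (p : form) : Prop :=
  match p with
  | FTop => True
  | FAtom a => kval M a s
  | FNeg q => ~ sat M s q
  | FAnd q r => sat M s q /\ sat M s r
  | FBox i q => forall t, krel M i s t -> sat M t q
  end.

Definition psat (x : pmodel) (p : form) : Prop := sat (pm_model x) (pm_point x) p.

Definition countable_type (T : Type) : Prop :=
  exists e : T -> nat, forall a b, e a = e b -> a = b.

Definition finite_type (T : Type) : Prop := exists l : list T, forall a, In a l.

(** An L_Lambda modal space: a set X of pointed Kripke models with countable
    (nonempty, via the point) state sets, each satisfying every formula of Lambda. *)
Definition modal_space (L : form -> Prop) (X : pmodel -> Prop) : Prop :=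
  forall x, X x -> countable_type (kst (pm_model x)) /\ (forall p, L p -> psat x p).

(** Modal equivalence: x and y represent the same point of the modal space. *)
Definition meq (x y : pmodel) : Prop := forall p, psat x p <-> psat y p.

(** Multi-pointed action models.  A postcondition is a list of literals
    (atom, polarity), read as their conjunction; the empty list is Top. *)
Record action_model : Type := AModel {
  act : Type;
  arel : G -> act -> act -> Prop;
  pre : act -> form;
  post : act -> list (A * bool);
  desig : act -> Prop }.

Definition post_entails (ps : list (A * bool)) (a : A) (b : bool) : Prop :=
  forall v : A -> bool, (forall l, In l ps -> v (fst l) = snd l) -> v a = b.

Definition am_finite (S : action_model) : Prop := finite_type (act S).
Definition am_boolean (S : action_model) : Prop := forall s, boolean_form (pre S s).
Definition am_static (S : action_model) : Prop := forall s, post S s = [].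

Definition upd_model (M : kmodel) (S : action_model) : kmodel :=
  {| kst := { q : kst M * act S | sat M (fst q) (pre S (snd q)) };
     krel := fun i u w =>
       krel M i (fst (proj1_sig u)) (fst (proj1_sig w)) /\
       arel S i (snd (proj1_sig u)) (snd (proj1_sig w));
     kval := fun a u =>
       post_entails (post S (snd (proj1_sig u))) a true \/
       (kval M a (fst (proj1_sig u)) /\
        ~ post_entails (post S (snd (proj1_sig u))) a false) |}.

Definition upd_at (x : pmodel) (S : action_model) (s : act S)
  (H : psat x (pre S s)) : pmodel :=
  {| pm_model := upd_model (pm_model x) S;
     pm_point := exist (fun q : kst (pm_model x) * act S =>
                          sat (pm_model x) (fst q) (pre S (snd q)))
                       (pm_point x, s) H |}.

Definition is_update (S : action_model) (x y : pmodel) : Prop :=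
  exists s (Hd : desig S s) (H : psat x (pre S s)), y = upd_at x S s H.

Definition precondition_finite (L : form -> Prop) (S : action_model) : Prop :=
  exists l : list form, forall s, exists q, In q l /\ L (FIff (pre S s) q).

Definition exhaustive_deterministic (X : pmodel -> Prop) (S : action_model) : Prop :=
  forall x, X x ->
    exists s, desig S s /\ psat x (pre S s) /\
      (forall s', desig S s' -> psat x (pre S s') -> s' = s).

(** f : pmodel -> pmodel is (on representatives in X) the clean map induced by S,
    and S is closing over X. *)
Definition clean_map_by (L : form -> Prop) (X : pmodel -> Prop) (S : action_model)
  (f : pmodel -> pmodel) : Prop :=
  (exists s, desig S s) /\
  countable_type (act S) /\
  precondition_finite L S /\
  exhaustive_deterministic X S /\
  (forall x, X x -> is_update S x (f x) /\ X (f x)).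

(** Convergence in the Stone topology of the modal space (the sets
    {x | x |= p} form a base: closed under conjunction and containing Top). *)
Definition converges (u : nat -> pmodel) (z : pmodel) : Prop :=
  forall p, psat z p -> exists N, forall n, N <= n -> psat (u n) p.

Definition iterf (f : pmodel -> pmodel) (n : nat) (x : pmodel) : pmodel :=
  Nat.iter n f x.

Definition in_limit_set (f : pmodel -> pmodel) (y z : pmodel) : Prop :=
  exists nk : nat -> nat, (forall k, nk k < nk (S k)) /\
    converges (fun k => iterf f (nk k) y) z.

Definition recurrent (f : pmodel -> pmodel) (y : pmodel) : Prop := in_limit_set f y y.

Definition periodic_orbit (f : pmodel -> pmodel) (x : pmodel) : Prop :=
  exists n k, 0 < k /\ meq (iterf f (n + k) x) (iterf f n x).

End Modal.

(* Main.v *)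
Require Import Defs.
From Stdlib Require Import List Arith Lia Bool Cantor Classical ClassicalEpsilon ProofIrrelevance.
Import ListNotations.

Fixpoint carry (n i : nat) : bool :=
  match i with 0 => true | S i => Nat.odd n && carry (Nat.div2 n) i end.

Lemma inc_bit : forall i n, Nat.testbit (S n) i = xorb (Nat.testbit n i) (carry n i).
Proof.
  induction i; intros n.
  - cbn [carry]. rewrite !Nat.bit0_odd, Nat.odd_succ, <- Nat.negb_odd.
    destruct (Nat.odd n); reflexivity.
  - rewrite <- !Nat.testbit_div2. simpl carry.
    destruct (Nat.Even_or_Odd n) as [He|Ho].
    + rewrite <- (Nat.Even_div2 n He).
      assert (Nat.odd n = false).
      { destruct (Nat.odd n) eqn:E; auto. apply Nat.odd_spec in E.
        exfalso; eapply Nat.Even_Odd_False; eauto. }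
      rewrite H; simpl. now rewrite xorb_false_r.
    + rewrite <- (Nat.Odd_div2 n Ho).
      assert (Nat.odd n = true) by (apply Nat.odd_spec; auto).
      rewrite H; simpl. apply IHi.
Qed.

Lemma carry_S : forall j n, carry n (S j) = carry n j && Nat.testbit n j.
Proof.
  induction j; intros n.
  - cbn [carry]. rewrite Nat.bit0_odd. now rewrite andb_true_r.
  - change (carry n (S (S j))) with (Nat.odd n && carry (Nat.div2 n) (S j)).
    rewrite IHj, <- Nat.testbit_div2. simpl. now rewrite andb_assoc.
Qed.

Fixpoint csat (b : nat -> bool) (j : nat) (p : form unit unit) : Prop :=
  match p with
  | FTop _ _ => True
  | FAtom _ _ => b j = true
  | FNeg q => ~ csat b j q
  | FAnd q r => csat b j q /\ csat b j r
  | FBox _ q => csat b (S j) q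
  end.

Fixpoint depth {A G} (p : form A G) : nat :=
  match p with
  | FTop _ _ => 0 | FAtom _ _ => 0
  | FNeg q => depth q
  | FAnd q r => max (depth q) (depth r)
  | FBox _ q => S (depth q)
  end.

Lemma csat_agree : forall p j b c,
  (forall i, j <= i -> i <= j + depth p -> b i = c i) -> (csat b j p <-> csat c j p).
Proof.
  induction p; intros j b c H; simpl in *.
  - tauto.
  - rewrite (H j); [tauto|lia|lia].
  - rewrite (IHp j b c); [tauto|]. intros; apply H; lia.
  - rewrite (IHp1 j b c), (IHp2 j b c); [tauto| |]; intros; apply H; lia.
  - apply IHp. intros; apply H; lia.
Qed.

Definition chainbis (x : pmodel unit unit) (b : nat -> bool) : Prop :=
  exists Z : kst (pm_model x) -> nat -> Prop,
    Z (pm_point x) 0 /\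
    (forall s j, Z s j -> (kval (pm_model x) tt s <-> b j = true)) /\
    (forall s j t, Z s j -> krel (pm_model x) tt s t -> Z t (S j)) /\
    (forall s j, Z s j -> exists t, krel (pm_model x) tt s t /\ Z t (S j)).

Lemma bis_sat : forall (M : kmodel unit unit) (Z : kst M -> nat -> Prop) b,
    (forall s j, Z s j -> (kval M tt s <-> b j = true)) ->
    (forall s j t, Z s j -> krel M tt s t -> Z t (S j)) ->
    (forall s j, Z s j -> exists t, krel M tt s t /\ Z t (S j)) ->
    forall p s j, Z s j -> (sat M s p <-> csat b j p).
Proof.
  intros M Z b Ha Hf Hb p. induction p; intros s j HZ; simpl.
  - tauto.
  - destruct a. apply Ha; auto.
  - rewrite (IHp s j HZ); tauto.
  - rewrite (IHp1 s j HZ), (IHp2 s j HZ); tauto.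
  - destruct g. split.
    + intros H. destruct (Hb s j HZ) as [t [Ht Zt]]. apply (IHp t); auto.
    + intros H t Ht. apply (IHp t (S j)); auto. eapply Hf; eauto.
Qed.

Lemma chainbis_psat : forall x b, chainbis x b -> forall p, psat x p <-> csat b 0 p.
Proof.
  intros x b [Z [H0 [Ha [Hf Hb]]]] p. unfold psat. eapply bis_sat; eauto.
Qed.

Definition Sg : action_model unit unit :=
  {| act := bool * bool;
     arel := fun _ u w => fst w = andb (fst u) (snd u);
     pre := fun u => if snd u then FAtom unit tt else FNeg (FAtom unit tt);
     post := fun u => [(tt, xorb (snd u) (fst u))];
     desig := fun u => fst u = true |}.

Definition fm (x : pmodel unit unit) : pmodel unit unit :=
  match excluded_middle_informative (psat x (FAtom unit tt)) with
  | left H => upd_at x Sg (true, true) H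
  | right H => upd_at x Sg (true, false) H
  end.

Lemma post_single : forall (a : unit) (b v : bool), post_entails [(a, b)] a v <-> b = v.
Proof.
  intros a b v; split.
  - intros H. apply (H (fun _ => b)). intros l [<-|[]]; reflexivity.
  - intros <- w H. apply (H (a, b)); left; reflexivity.
Qed.

Lemma step : forall x n, chainbis x (Nat.testbit n) -> chainbis (fm x) (Nat.testbit (S n)).
Proof.
  intros x n [Z [H0 [Ha [Hf Hb]]]].
  set (M := pm_model x).
  assert (Hpt : forall y : pmodel unit unit, pm_model y = upd_model M Sg ->
     True) by auto.
  set (Z' := fun (u : kst (upd_model M Sg)) j =>
              Z (fst (proj1_sig u)) j /\ snd (proj1_sig u) = (carry n j, Nat.testbit n j)).
  assert (Ha' : forall u j, Z' u j -> (kval (upd_model M Sg) tt u <-> Nat.testbit (S n) j = true)).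
  { intros [[s [c b]] Hs] j [HZ He]; simpl in *. inversion He; subst c b.
    rewrite inc_bit. rewrite !post_single.
    destruct (xorb (Nat.testbit n j) (carry n j)); intuition discriminate. }
  assert (Hf' : forall u j w, Z' u j -> krel (upd_model M Sg) tt u w -> Z' w (S j)).
  { intros [[s [c b]] Hs] j [[t [c' b']] Ht] [HZ He] [Hr Hr']; simpl in *.
    inversion He; subst c b. subst c'.
    assert (HZt : Z t (S j)) by (eapply Hf; eauto).
    assert (Hbit : b' = Nat.testbit n (S j)).
    { specialize (Ha t (S j) HZt). destruct b'; simpl in Ht.
      - symmetry; apply Ha; exact Ht.
      - destruct (Nat.testbit n (S j)); auto. exfalso; apply Ht; apply Ha; auto. }
    subst b'. split; [exact HZt|]. cbn [proj1_sig snd fst]. rewrite carry_S. reflexivity. }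
  assert (Hb' : forall u j, Z' u j -> exists w, krel (upd_model M Sg) tt u w /\ Z' w (S j)).
  { intros [[s [c b]] Hs] j [HZ He]; simpl in *. inversion He; subst c b.
    destruct (Hb s j HZ) as [t [Hst HZt]].
    assert (Hpre : sat M (fst (t, (carry n (S j), Nat.testbit n (S j))))
                     (pre Sg (snd (t, (carry n (S j), Nat.testbit n (S j)))))).
    { specialize (Ha t (S j) HZt). cbn [fst snd pre Sg].
      destruct (Nat.testbit n (S j)); cbn [sat]; [apply Ha; auto | intros Hk; apply Ha in Hk; discriminate]. }
    exists (exist _ (t, (carry n (S j), Nat.testbit n (S j))) Hpre).
    split.
    - split; cbn [fst snd proj1_sig]; auto. apply (carry_S j n).
    - split; cbn [fst snd proj1_sig]; auto. }
  unfold fm. destruct (excluded_middle_informative _) as [H|H].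
  - exists Z'. split; [|split; [exact Ha'|split; [exact Hf'|exact Hb']]].
    split; cbn [proj1_sig fst snd pm_point upd_at carry]; auto. f_equal. symmetry. apply (Ha _ 0 H0); exact H.
  - exists Z'. split; [|split; [exact Ha'|split; [exact Hf'|exact Hb']]].
    split; cbn [proj1_sig fst snd pm_point upd_at carry]; auto. f_equal.
    destruct (Nat.testbit n 0) eqn:E; auto. exfalso; apply H; apply (Ha _ 0 H0); exact E.
Qed.

Definition valid (p : form unit unit) : Prop := forall (M : kmodel unit unit) s, sat M s p.

Lemma tval_sat : forall (M : kmodel unit unit) s p,
  tval (fun q => if excluded_middle_informative (sat M s q) then true else false) p = true
  <-> sat M s p.
Proof.
  intros M s p; induction p; simpl.
  - tauto.
  - destruct (excluded_middle_informative _); intuition discriminate.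
  - rewrite negb_true_iff, <- not_true_iff_false. tauto.
  - rewrite andb_true_iff. tauto.
  - destruct (excluded_middle_informative _); intuition discriminate.
Qed.

Lemma sat_subst : forall (M : kmodel unit unit) sg p s,
  sat M s (subst sg p) <-> sat {| kst := kst M; krel := krel M; kval := fun a t => sat M t (sg a) |} s p.
Proof.
  intros M sg p; induction p; intros s; simpl.
  - tauto.
  - tauto.
  - rewrite IHp; tauto.
  - rewrite IHp1, IHp2; tauto.
  - split; intros H t Ht; apply IHp; auto.
Qed.

Lemma valid_normal : normal_logic valid.
Proof.
  split; [|split; [|split; [|split]]].
  - intros p Ht M s. apply tval_sat. apply Ht.
  - intros i p q M s. simpl. intros [H1 H2]. apply H2. intros [H3 H4]. apply H4.
    intros t Ht. specialize (H1 t Ht). specialize (H3 t Ht).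
    apply NNPP. intros Hq. apply H1; auto.
  - intros p q Hp Hpq M s. specialize (Hpq M s). simpl in Hpq.
    apply NNPP. intros Hq. apply Hpq. split; auto.
  - intros i p Hp M s t _. apply Hp.
  - intros sg p Hp M s. apply sat_subst. apply Hp.
Qed.

Definition enc_act (u : bool * bool) : nat :=
  (if fst u then 2 else 0) + (if snd u then 1 else 0).

Lemma enc_act_inj : forall a b, enc_act a = enc_act b -> a = b.
Proof. intros [[|] [|]] [[|] [|]]; simpl; intros H; try discriminate; reflexivity. Qed.

Lemma upd_countable : forall M, countable_type (kst M) -> countable_type (kst (upd_model M Sg)).
Proof.
  intros M [e He].
  exists (fun u => to_nat (e (fst (proj1_sig u)), enc_act (snd (proj1_sig u)))).
  intros [[s a] Hs] [[t b] Ht] H. cbn [proj1_sig fst snd] in H.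
  apply to_nat_inj in H. inversion H as [[H1 H2]].
  apply He in H1. apply enc_act_inj in H2. subst.
  f_equal. apply proof_irrelevance.
Qed.

Lemma fm_countable : forall x, countable_type (kst (pm_model x)) -> countable_type (kst (pm_model (fm x))).
Proof.
  intros x H. unfold fm. destruct (excluded_middle_informative _); simpl; apply upd_countable; auto.
Qed.

Definition chain : kmodel unit unit :=
  {| kst := nat; krel := fun _ i j => j = S i; kval := fun _ _ => False |}.
Definition x0 : pmodel unit unit := PModel chain 0.

Lemma chain0 : chainbis x0 (Nat.testbit 0).
Proof.
  exists (fun s j => s = j). simpl. split; [reflexivity|split; [|split]].
  - intros s j ->. rewrite Nat.bits_0. split; [tauto|discriminate].
  - intros s j t -> ->. reflexivity.
  - intros s j ->. exists (S j). auto.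
Qed.

Lemma orbit_bis : forall n, chainbis (iterf fm n x0) (Nat.testbit n).
Proof.
  induction n. - exact chain0. - apply step. exact IHn.
Qed.

Lemma orbit_countable : forall n, countable_type (kst (pm_model (iterf fm n x0))).
Proof.
  induction n.
  - exists (fun k : nat => k). auto.
  - apply fm_countable. exact IHn.
Qed.

Definition boxes (i : nat) : form unit unit := Nat.iter i (FBox tt) (FAtom unit tt).

Lemma csat_boxes : forall i b j, csat b j (boxes i) <-> b (j + i) = true.
Proof.
  induction i; intros b j; simpl.
  - rewrite Nat.add_0_r. tauto.
  - change (csat b (S j) (boxes i) <-> b (j + S i) = true).
    rewrite IHi. rewrite Nat.add_succ_r. tauto.
Qed.

Theorem proposition11 :
  exists (Atom Agent : Type),
    finite_type Atom /\ finite_type Agent /\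
    exists (L : form Atom Agent -> Prop) (X : pmodel Atom Agent -> Prop)
           (S : action_model Atom Agent) (f : pmodel Atom Agent -> pmodel Atom Agent),
      normal_logic L /\ modal_space L X /\
      am_finite S /\ am_boolean S /\ ~ am_static S /\
      clean_map_by L X S f /\
      exists x, X x /\ ~ periodic_orbit f x /\
        exists m, recurrent f (iterf f m x).
Proof.
  exists unit, unit.
  split; [exists [tt]; intros []; left; reflexivity|].
  split; [exists [tt]; intros []; left; reflexivity|].
  exists valid, (fun y => exists n, y = iterf fm n x0), Sg, fm.
  split; [exact valid_normal|].
  split.
  { intros x [n ->]. split; [apply orbit_countable|]. intros p Hp. apply Hp. }
  split.
  { exists [(false,false);(false,true);(true,false);(true,true)].
    intros [[|] [|]]; simpl; tauto. }
  split.
  { intros [c [|]]; simpl; tauto. }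
  split.
  { intros H. specialize (H (true, true)). discriminate H. }
  split.
  { split; [exists (true, true); reflexivity|].
    split; [exists enc_act; exact enc_act_inj|].
    split.
    { exists [FAtom unit tt; FNeg (FAtom unit tt)].
      intros [c [|]]; simpl.
      - exists (FAtom unit tt). split; [tauto|]. intros M s. simpl. tauto.
      - exists (FNeg (FAtom unit tt)). split; [tauto|]. intros M s. simpl. tauto. }
    split.
    { intros x _. destruct (excluded_middle_informative (psat x (FAtom unit tt))) as [H|H].
      - exists (true, true). split; [reflexivity|]. split; [exact H|].
        intros [c' b'] Hd Hp. simpl in Hd. subst c'. destruct b'; auto.
        exfalso; apply Hp; exact H.
      - exists (true, false). split; [reflexivity|]. split; [exact H|].
        intros [c' b'] Hd Hp. simpl in Hd. subst c'. destruct b'; auto.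
        exfalso; apply H; exact Hp. }
    intros x [n ->]. split.
    - unfold fm. destruct (excluded_middle_informative _) as [H|H].
      + exists (true, true), eq_refl, H. reflexivity.
      + exists (true, false), eq_refl, H. reflexivity.
    - exists (Datatypes.S n). reflexivity. }
  exists x0. split; [exists 0; reflexivity|]. split.
  - intros [n [k [Hk Hm]]].
    assert (Hb : forall i, Nat.testbit (n + k) i = Nat.testbit n i).
    { intros i. specialize (Hm (boxes i)).
      rewrite (chainbis_psat _ _ (orbit_bis (n + k))), (chainbis_psat _ _ (orbit_bis n)) in Hm.
      rewrite !csat_boxes in Hm. simpl in Hm. apply eq_true_iff_eq. exact Hm. }
    apply Nat.bits_inj in Hb. lia.
  - exists 0. exists (fun k => 2 ^ k). split.
    + intros k. rewrite Nat.pow_succ_r'. pose proof (Nat.pow_nonzero 2 k). lia.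
    + intros p Hp. exists (Datatypes.S (depth p)). intros n Hn.
      change (iterf fm 0 x0) with x0 in Hp.
      rewrite (chainbis_psat _ _ (orbit_bis 0)) in Hp.
      rewrite (chainbis_psat _ _ (orbit_bis (2 ^ n))).
      apply (csat_agree p 0 (Nat.testbit 0)); auto.
      intros i _ Hi. rewrite Nat.bits_0, Nat.pow2_bits_eqb.
      symmetry. apply Nat.eqb_neq. lia.
Qed.
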